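(* There is an absolute constant $C$ such that for every finite set $U$ of size $N\ge 4$ and every real $\Delta\ge 0$ there exists a $(\Delta,L)$-UCS over $U$ with $L(P)\le C\,(H(P)+\Delta+\log_2\log_2 N)$ for every $P\in\mathcal P(U)$. That is, there is a deterministic pair $(E,D)$ with $D(Q,E(P,m))=m$ for all $\Delta$-close $P,Q$ and all $m\in U$, whose expected encoding length under $P$ is $O(H(P)+\Delta+\log\log N)$.
   Context: $\mathcal P(U)$ denotes the set of all probability distributions on the finite set $U$; $\{0,1\}^*$ is the set of finite binary strings and $|x|$ the length of $x$. For $P,Q\in\mathcal P(U)$ and $\Delta\ge0$, $P$ and $Q$ are $\Delta$-close if for all $m\in U$, $\log_2(P(m)/Q(m))\le\Delta$ and $\log_2(Q(m)/P(m))\le\Delta$; $\delta(P,Q)$ is the minimum $\Delta$ for which they are $\Delta$-close. $H(P)=\sum_{m}P(m)\log_2(1/P(m))$ is the binary entropy. A $(\Delta,L)$-UCS (uncertain compression scheme) over $U$, where $L:\mathcal P(U)\to\mathbb R^+$, is a pair of maps $E:\mathcal P(U)\times U\to\{0,1\}^*$ and $D:\mathcal P(U)\times\{0,1\}^*\to U$ such that (i) for every pair $P,Q\in\mathcal P(U)$ that are $\Delta$-close and every $m\in U$, $D(Q,E(P,m))=m$, and (ii) for every $P\in\mathcal P(U)$, $\mathbb E_{m\sim P}[|E(P,m)|]\le L(P)$. *)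

(* Defs.v *)
From Stdlib Require Import Reals List.
Open Scope R_scope.

(* The finite universe U of size N is {0, ..., N-1} (naturals m with m < N). *)

Fixpoint rsum (n : nat) (f : nat -> R) : R :=
  match n with
  | O => 0
  | S k => rsum k f + f k
  end.

Definition log2 (x : R) : R := ln x / ln 2.

(* P is a probability distribution on U = {0,...,N-1}
   (values outside U are irrelevant). *)
Definition is_dist (N : nat) (P : nat -> R) : Prop :=
  (forall m, (m < N)%nat -> 0 <= P m) /\ rsum N P = 1.

(* Delta-closeness: log2(P m / Q m) <= Delta and log2(Q m / P m) <= Delta for
   all m in U, written multiplicatively (convention log2(0/0) = 0, and
   log2(x/0) = +oo for x > 0). *)
Definition close (N : nat) (Delta : R) (P Q : nat -> R) : Prop :=
  forall m, (m < N)%nat ->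
    P m <= Rpower 2 Delta * Q m /\ Q m <= Rpower 2 Delta * P m.

Definition entropy (N : nat) (P : nat -> R) : R :=
  rsum N (fun m => if Rlt_dec 0 (P m) then P m * log2 (/ P m) else 0).

Definition exp_len (N : nat) (P : nat -> R)
  (E : (nat -> R) -> nat -> list bool) : R :=
  rsum N (fun m => P m * INR (length (E P m))).

Definition is_UCS (N : nat) (Delta : R) (L : (nat -> R) -> R)
  (E : (nat -> R) -> nat -> list bool)
  (D : (nat -> R) -> list bool -> nat) : Prop :=
  (forall Q x, (D Q x < N)%nat) /\
  (forall P, is_dist N P -> 0 < L P) /\
  (forall P Q m, is_dist N P -> is_dist N Q -> close N Delta P Q ->
     (m < N)%nat -> D Q (E P m) = m) /\
  (forall P, is_dist N P -> exp_len N P E <= L P).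

(* Main.v *)
Require Import Defs.
From Stdlib Require Import Reals List Lia Lra ZArith.
From mathcomp Require all_boot all_algebra all_field.
Open Scope R_scope.

Module MC.
Import all_boot all_algebra all_field.
Import GRing.Theory.
Local Open Scope nat_scope.

Lemma prime2 : prime 2. Proof. by []. Qed.
Definition Fb (b : nat) : finFieldType :=
  s2val (@pPrimePowerField 2 b.+1 prime2 (ltn0Sn b)).
Lemma card_Fb b : #|Fb b| = 2 ^ b.+1.
Proof. exact: (s2valP' (@pPrimePowerField 2 b.+1 prime2 (ltn0Sn b))). Qed.

Lemma expn_pow m n : m ^ n = Nat.pow m n.
Proof. elim: n => [|n IH] //=; by rewrite expnS IH. Qed.

Definition bit (m i : nat) : bool := odd (m %/ 2 ^ i).

Definition hsh (F : finFieldType) (x : F) (n m : nat) : F :=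
  (\sum_(i < n) (bit m i)%:R * x ^+ i)%R.
Arguments hsh {F}.

Lemma bits_inj n m m' : m < 2 ^ n -> m' < 2 ^ n ->
  (forall i, i < n -> bit m i = bit m' i) -> m = m'.
Proof.
elim: n m m' => [|n IH] m m'.
  by rewrite expn0 !ltnS !leqn0 => /eqP -> /eqP ->.
move=> Hm Hm' Hb.
have H0 : odd m = odd m'.
  by have := Hb 0 (ltn0Sn n); rewrite /bit expn0 !divn1.
have Hh : m./2 = m'./2.
  apply: IH.
  - by rewrite ltn_half_double -mul2n -expnS.
  - by rewrite ltn_half_double -mul2n -expnS.
  - move=> i Hi; have := Hb i.+1 Hi.
    by rewrite /bit expnS !divnMA !divn2.
by rewrite -(odd_double_half m) -(odd_double_half m') H0 Hh.
Qed.

Lemma roots_card (F : finFieldType) (q : {poly F}) :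
  q != 0%R -> #|[set x | root q x]| < size q.
Proof.
move=> q0; rewrite cardE; apply: max_poly_roots => //; last exact: enum_uniq.
by apply/allP => x; rewrite mem_enum inE.
Qed.

Arguments roots_card {F q}.

Lemma hsh_diff_card (F : finFieldType) n a m : a < 2 ^ n -> m < 2 ^ n -> a != m ->
  #|[set x : F | hsh x n a == hsh x n m]| <= n.
Proof.
move=> Ha Hm Ham.
pose q : {poly F} := (\poly_(i < n) ((bit a i)%:R - (bit m i)%:R))%R.
have -> : [set x : F | hsh x n a == hsh x n m] = [set x | root q x].
  apply/setP => x; rewrite !inE /root horner_poly /hsh.
  rewrite -subr_eq0; congr (_ == _).
  rewrite -sumrB; apply: eq_bigr => i _; by rewrite mulrBl.
have qn0 : q != 0%R.
  have [i Hi Hne] : exists2 i, i < n & bit a i != bit m i.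
    case: (boolP [exists i : 'I_n, bit a i != bit m i]).
      by case/existsP => i Hi; exists i.
    rewrite negb_exists => /forallP H.
    case/negP: Ham; apply/eqP; apply: (@bits_inj n a m Ha Hm) => i Hi.
    by apply/eqP; move: (H (Ordinal Hi)); rewrite negbK.
  apply/eqP => q0; have := congr1 (fun p : {poly F} => (p`_i)%R) q0.
  rewrite coef_poly Hi coef0; move: Hne.
  case: (bit a i); case: (bit m i) => //= _.
    by rewrite subr0 => /eqP; rewrite oner_eq0.
  by rewrite sub0r => /eqP; rewrite oppr_eq0 oner_eq0.
have H1 := roots_card qn0.
have H2 : size q <= n by apply: size_poly.
by apply: ltnW; apply: leq_trans H1 H2.
Qed.

Lemma good_point (F : finFieldType) n (S : seq nat) m : m < 2 ^ n ->
  (forall m', m' \in S -> (m' < 2 ^ n) && (m' != m)) -> size S * n < #|F| ->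
  exists x : F, all (fun m' => hsh x n m' != hsh x n m) S.
Proof.
move=> Hm HS Hsz.
have Hc : #|[set x : F | ~~ all (fun m' => hsh x n m' != hsh x n m) S]| <= size S * n.
  elim: S HS {Hsz} => [|a S IH] HS.
    rewrite leqn0 cards_eq0; apply/eqP; apply/setP => x; by rewrite !inE.
  have -> : [set x : F | ~~ all (fun m' => hsh x n m' != hsh x n m) (a :: S)] =
     [set x | hsh x n a == hsh x n m] :|: [set x : F | ~~ all (fun m' => hsh x n m' != hsh x n m) S].
    by apply/setP => x; rewrite !inE /= negb_and negbK.
  apply: leq_trans (leq_card_setU _ _) _.
  rewrite /= mulSn leq_add //.
    have /andP [Ha1 Ha2] := HS a (mem_head a S).
    exact: hsh_diff_card.
  by apply: IH => m' Hm'; apply: HS; rewrite in_cons Hm' orbT.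
apply/existsP; apply: contraT; rewrite negb_exists => /forallP H.
have : #|[set x : F | ~~ all (fun m' => hsh x n m' != hsh x n m) S]| = #|F|.
  rewrite -cardsT; congr #|pred_of_set _|; apply/setP => x; rewrite !inE; exact: H.
by move=> E; move: (leq_ltn_trans Hc Hsz); rewrite E ltnn.
Qed.

Definition pickx b n (S : seq nat) m : Fb b :=
  odflt 0%R [pick x : Fb b | all (fun m' => hsh x n m' != hsh x n m) S].

Lemma pickx_spec b n S m : m < 2 ^ n ->
  (forall m', m' \in S -> (m' < 2 ^ n) && (m' != m)) -> size S * n < 2 ^ b.+1 ->
  all (fun m' => hsh (pickx b n S m) n m' != hsh (pickx b n S m) n m) S.
Proof.
move=> Hm HS Hsz; rewrite /pickx; case: pickP => [x Hx|H] //=.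
have Hsz' : size S * n < #|Fb b| by rewrite card_Fb.
have [x Hx] := @good_point (Fb b) n S m Hm HS Hsz'.
by move: (H x) => /= ; rewrite Hx.
Qed.

Fixpoint tobits (b r : nat) : seq bool :=
  if b is b'.+1 then odd r :: tobits b' r./2 else [::].
Fixpoint frombits (l : seq bool) : nat :=
  if l is c :: l' then c + (frombits l').*2 else 0.

Lemma frombitsK b r : r < 2 ^ b -> frombits (tobits b r) = r.
Proof.
elim: b r => [|b IH] r /=; first by rewrite expn0 ltnS leqn0 => /eqP ->.
move=> Hr; rewrite IH ?odd_double_half //.
by rewrite ltn_half_double -mul2n -expnS.
Qed.

Lemma size_tobits b r : size (tobits b r) = b.
Proof. by elim: b r => [|b IH] r //=; rewrite IH. Qed.

Definition encF b (x : Fb b) : seq bool := tobits b.+1 (index x (enum (Fb b))).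
Definition decF b (l : seq bool) : Fb b := nth 0%R (enum (Fb b)) (frombits l).

Lemma decF_encF b x : decF b (encF b x) = x.
Proof.
rewrite /decF /encF frombitsK ?nth_index ?mem_enum //.
by rewrite -card_Fb cardE index_mem mem_enum.
Qed.

Lemma size_encF b x : size (encF b x) = b.+1.
Proof. exact: size_tobits. Qed.

Definition search N (p : pred nat) : nat :=
  let i := find p (iota 0 N) in if i < N then i else 0.

Lemma search_spec N (p : pred nat) m : m < N -> p m ->
  (forall i, i < N -> p i -> i = m) -> search N p = m.
Proof.
move=> HmN Hpm Hu.
have Hh : has p (iota 0 N) by apply/hasP; exists m => //; rewrite mem_iota.
have := has_find p (iota 0 N); rewrite Hh size_iota => /esym Hf.
rewrite /search Hf; apply: Hu => //.
by have := nth_find 0 Hh; rewrite nth_iota.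
Qed.

Lemma search_lt N p : 0 < N -> search N p < N.
Proof. by move=> HN; rewrite /search; case: ifP. Qed.

Fixpoint Tlist (p : nat -> bool) (n : nat) : seq nat :=
  if n is k.+1 then (if p k then k :: Tlist p k else Tlist p k) else [::].

Lemma mem_Tlist p n x : (x \in Tlist p n) = (x < n) && p x.
Proof.
elim: n => [|n IH] //=.
rewrite ltnS leq_eqVlt; case: (eqVneq x n) => [E|Hxn] /=.
  by case Hp: (p n); rewrite ?in_cons IH E ?eqxx ?ltnn ?Hp.
by case Hp: (p n); rewrite ?in_cons ?(negbTE Hxn) IH.
Qed.

Definition eposx b n (S : seq nat) m : seq bool :=
  let x := pickx b n S m in encF b x ++ encF b (hsh x n m).

Definition dposx b n N (cand : nat -> bool) (rest : seq bool) : nat :=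
  let x := decF b (take b.+1 rest) in
  let v := decF b (take b.+1 (drop b.+1 rest)) in
  search N (fun i => cand i && (hsh x n i == v)).

Lemma dposx_lt b n N cand rest : (0 < N)%coq_nat -> (dposx b n N cand rest < N)%coq_nat.
Proof. by move=> /ltP H; apply/ltP; exact: search_lt. Qed.

Lemma length_size (T : Type) (l : seq T) : List.length l = size l.
Proof. by elim: l => //= a l ->. Qed.

Lemma length_eposx b n S m : List.length (eposx b n S m) = (b.+1 + b.+1)%coq_nat.
Proof. by rewrite length_size size_cat !size_encF addnE. Qed.

Lemma dpos_epos b n N (pE cand : nat -> bool) m tail :
  (m < N)%coq_nat -> (N <= Nat.pow 2 n)%coq_nat -> pE m = false ->
  (size (Tlist pE N) * n < Nat.pow 2 (S b))%coq_nat -> cand m = true ->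
  (forall i, (i < N)%coq_nat -> cand i = true -> i <> m -> pE i = true) ->
  dposx b n N cand (eposx b n (Tlist pE N) m ++ tail) = m.
Proof.
move=> /ltP HmN /leP HN HpEm /ltP Hsz Hcm Hu.
rewrite -!expn_pow in HN Hsz.
rewrite /dposx /eposx -catA take_size_cat ?size_encF // drop_size_cat ?size_encF //.
rewrite take_size_cat ?size_encF // !decF_encF.
set x := pickx b n (Tlist pE N) m.
have Hm : m < 2 ^ n by apply: leq_trans HmN HN.
have HS : forall m', m' \in Tlist pE N -> (m' < 2 ^ n) && (m' != m).
  move=> m'; rewrite mem_Tlist => /andP [H1 H2].
  rewrite (leq_trans H1 HN) /=; apply/eqP => E; by rewrite E HpEm in H2.
have Hall := @pickx_spec b n (Tlist pE N) m Hm HS Hsz.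
apply: search_spec => //; first by rewrite Hcm eqxx.
move=> i Hi /andP [Hci /eqP Hh].
apply/eqP; apply: contraT => Him.
have HiS : i \in Tlist pE N.
  by rewrite mem_Tlist Hi (Hu i (elimT ltP Hi) Hci (elimN eqP Him)).
by move: (allP Hall i HiS); rewrite -/x Hh eqxx.
Qed.

Lemma frombits_tobits n m : (m < Nat.pow 2 n)%coq_nat -> frombits (tobits n m) = m.
Proof. by move=> /ltP H; apply: frombitsK; rewrite expn_pow. Qed.

Lemma length_tobits n m : List.length (tobits n m) = n.
Proof. by rewrite length_size size_tobits. Qed.

End MC.

Lemma ln2_pos : 0 < ln 2.
Proof. pose proof ln_lt_2; lra. Qed.

Lemma ln_le' x y : 0 < x -> x <= y -> ln x <= ln y.
Proof.
intros Hx Hxy; destruct (Rle_lt_or_eq_dec x y Hxy) as [H|H].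
- left; apply ln_increasing; auto.
- subst; lra.
Qed.

Lemma log2_le x y : 0 < x -> x <= y -> log2 x <= log2 y.
Proof.
intros Hx Hxy; unfold log2, Rdiv.
apply Rmult_le_compat_r; [left; apply Rinv_0_lt_compat, ln2_pos|].
apply ln_le'; auto.
Qed.

Lemma log2_mult2 x : 0 < x -> log2 (2 * x) = 1 + log2 x.
Proof.
intros Hx; unfold log2; rewrite ln_mult by lra.
pose proof ln2_pos; field; lra.
Qed.

Lemma log2_2 : log2 2 = 1.
Proof. unfold log2; pose proof ln2_pos; field; lra. Qed.

Lemma log2_pow k : log2 (2 ^ k) = INR k.
Proof. unfold log2; rewrite ln_pow by lra; pose proof ln2_pos; field; lra. Qed.

Lemma Rpower2_log2 x : 0 < x -> Rpower 2 (log2 x) = x.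
Proof.
intros Hx; unfold Rpower, log2.
replace (ln x / ln 2 * ln 2) with (ln x) by (pose proof ln2_pos; field; lra).
apply exp_ln; auto.
Qed.

Lemma log2_nat_le M : (0 < M)%nat -> INR (Nat.log2 M) <= log2 (INR M).
Proof.
intros HM; destruct (Nat.log2_spec M HM) as [H1 _].
apply le_INR in H1; rewrite pow_INR in H1; simpl INR in H1.
rewrite <- (log2_pow (Nat.log2 M)).
apply log2_le; auto. apply pow_lt; lra.
Qed.

Definition LL (N : nat) : R := log2 (log2 (INR N)).
Definition n_of (N : nat) : nat := (Nat.log2 N + 1)%nat.
Definition lgn_of (N : nat) : nat := (Nat.log2 (n_of N) + 1)%nat.

Lemma log2N_ge2 N : (4 <= N)%nat -> 2 <= log2 (INR N).
Proof.
intros HN. replace 2 with (log2 (2 ^ 2)) at 1 by (rewrite log2_pow; simpl; lra).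
apply log2_le; [simpl; lra|]. apply le_INR in HN; simpl in HN |- *; lra.
Qed.

Lemma LL_ge1 N : (4 <= N)%nat -> 1 <= LL N.
Proof.
intros HN; unfold LL; rewrite <- log2_2.
apply log2_le; [lra|]. pose proof (log2N_ge2 N HN); lra.
Qed.

Lemma lgn_bound N : (4 <= N)%nat -> INR (lgn_of N) <= 2 + LL N.
Proof.
intros HN; unfold lgn_of, LL.
pose proof (log2N_ge2 N HN) as H2.
assert (Hn : INR (n_of N) <= 2 * log2 (INR N)).
{ unfold n_of; rewrite plus_INR; simpl (INR 1).
  pose proof (log2_nat_le N ltac:(lia)); lra. }
rewrite plus_INR; simpl (INR 1).
assert (Hn0 : (0 < n_of N)%nat) by (unfold n_of; lia).
pose proof (log2_nat_le _ Hn0) as H3.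
assert (H4 : log2 (INR (n_of N)) <= log2 (2 * log2 (INR N))).
{ apply log2_le; auto. apply lt_0_INR; auto. }
rewrite log2_mult2 in H4 by lra. lra.
Qed.

Lemma n_of_spec N : (0 < N)%nat -> (N <= 2 ^ n_of N)%nat.
Proof.
intros HN; destruct (Nat.log2_spec N HN) as [_ H]; unfold n_of.
rewrite Nat.add_1_r; lia.
Qed.

Lemma lgn_spec N : (n_of N < 2 ^ lgn_of N)%nat.
Proof.
assert (H0 : (0 < n_of N)%nat) by (unfold n_of; lia).
destruct (Nat.log2_spec _ H0) as [_ H]; unfold lgn_of.
rewrite Nat.add_1_r; lia.
Qed.

Lemma rsum_le n f g : (forall i, (i < n)%nat -> f i <= g i) -> rsum n f <= rsum n g.
Proof.
induction n; intros H; simpl; [lra|].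
apply Rplus_le_compat; [apply IHn; intros; apply H; lia| apply H; lia].
Qed.

Lemma rsum_plus n f g : rsum n (fun i => f i + g i) = rsum n f + rsum n g.
Proof. induction n; simpl; [lra| rewrite IHn; lra]. Qed.

Lemma rsum_scal n c f : rsum n (fun i => c * f i) = c * rsum n f.
Proof. induction n; simpl; [lra| rewrite IHn; lra]. Qed.

Lemma rsum_scal_r n c f : rsum n (fun i => f i * c) = rsum n f * c.
Proof. induction n; simpl; [lra| rewrite IHn; lra]. Qed.

Lemma rsum_nonneg n f : (forall i, (i < n)%nat -> 0 <= f i) -> 0 <= rsum n f.
Proof.
induction n; intros H; simpl; [lra|].
pose proof (H n ltac:(lia)); pose proof (IHn ltac:(intros; apply H; lia)); lra.
Qed.

Lemma rsum_term n f i : (forall j, (j < n)%nat -> 0 <= f j) -> (i < n)%nat -> f i <= rsum n f.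
Proof.
induction n; intros H Hi; [lia|]; simpl.
destruct (Nat.eq_dec i n) as [->|Hne].
- pose proof (rsum_nonneg n f ltac:(intros; apply H; lia)); lra.
- pose proof (IHn ltac:(intros; apply H; lia) ltac:(lia)); pose proof (H n ltac:(lia)); lra.
Qed.

Lemma dist_le1 N P m : is_dist N P -> (m < N)%nat -> P m <= 1.
Proof. intros [H1 H2] Hm; rewrite <- H2; apply rsum_term; auto. Qed.

Definition kP (p : R) : nat := Z.to_nat (up (log2 (/ p))).
Definition D2 (Delta : R) : nat := Z.to_nat (up (2 * Delta)).
Definition bof N Delta k : nat := (k + D2 Delta + lgn_of N)%nat.
Definition thrE (k : nat) Delta := / (2 ^ k * Rpower 2 (2 * Delta)).
Definition thrD (k : nat) Delta := / (2 ^ k * Rpower 2 Delta).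
Definition predE (P : nat -> R) m thr (i : nat) : bool :=
  if Rlt_dec thr (P i) then negb (Nat.eqb i m) else false.

Definition Enc N Delta (P : nat -> R) (m : nat) : list bool :=
  if Rlt_dec 0 (P m) then
    let k := kP (P m) in
    true :: (repeat true k ++ false ::
      MC.eposx (bof N Delta k) (n_of N) (MC.Tlist (predE P m (thrE k Delta)) N) m)
  else false :: MC.tobits (n_of N) m.

Fixpoint split_unary (l : list bool) : nat * list bool :=
  match l with
  | true :: r => let (k, rest) := split_unary r in (S k, rest)
  | false :: r => (0%nat, r)
  | nil => (0%nat, nil)
  end.

Definition Dec N Delta (Q : nat -> R) (l : list bool) : nat :=
  match l with
  | true :: r => let (k, rest) := split_unary r in
      MC.dposx (bof N Delta k) (n_of N) N
        (fun i => if Rlt_dec (thrD k Delta) (Q i) then true else false) rest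
  | false :: r => let v := MC.frombits r in if Nat.ltb v N then v else 0%nat
  | nil => 0%nat
  end.

Lemma split_unary_repeat k r : split_unary (repeat true k ++ false :: r) = (k, r).
Proof. induction k; simpl; [reflexivity| rewrite IHk; reflexivity]. Qed.

Lemma up_pos_nat y : 0 <= y ->
  INR (Z.to_nat (up y)) = IZR (up y) /\ y < INR (Z.to_nat (up y)) /\ INR (Z.to_nat (up y)) <= y + 1.
Proof.
intros Hy; destruct (archimed y) as [H1 H2].
assert (Hz : (0 <= up y)%Z) by (apply le_IZR; lra).
assert (E : INR (Z.to_nat (up y)) = IZR (up y)) by (rewrite INR_IZR_INZ, Z2Nat.id; auto).
rewrite E; repeat split; lra.
Qed.

Lemma kP_spec p : 0 < p -> p <= 1 ->
  / 2 ^ kP p < p /\ INR (kP p) <= log2 (/ p) + 1 /\ 0 <= log2 (/ p).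
Proof.
intros Hp Hp1.
assert (Hy : 0 <= log2 (/ p)).
{ replace 0 with (log2 (2 ^ 0)) by (rewrite log2_pow; reflexivity). apply log2_le; simpl; [lra|].
  rewrite <- Rinv_1; apply Rinv_le_contravar; lra. }
destruct (up_pos_nat _ Hy) as [_ [H1 H2]]. unfold kP.
repeat split; auto.
assert (H3 : / p < 2 ^ Z.to_nat (up (log2 (/ p)))).
{ rewrite <- Rpower_pow by lra. rewrite <- (Rpower2_log2 (/ p)) at 1 by (apply Rinv_0_lt_compat; lra).
  apply Rpower_lt; lra. }
rewrite <- (Rinv_inv p) at 2.
apply Rinv_lt_contravar; auto.
apply Rmult_lt_0_compat; [apply Rinv_0_lt_compat; lra| apply pow_lt; lra].
Qed.

Lemma D2_spec Delta : 0 <= Delta ->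
  INR (D2 Delta) <= 2 * Delta + 1 /\ Rpower 2 (2 * Delta) <= 2 ^ D2 Delta.
Proof.
intros HD; destruct (up_pos_nat (2 * Delta) ltac:(lra)) as [_ [H1 H2]].
unfold D2; split; auto.
rewrite <- Rpower_pow by lra. apply Rle_Rpower; lra.
Qed.

Lemma count_Tlist n (P : nat -> R) m thr :
  (forall i, (i < n)%nat -> 0 <= P i) ->
  INR (seq.size (MC.Tlist (predE P m thr) n)) * thr <= rsum n P.
Proof.
induction n; intros H; cbn -[INR]; [simpl; lra|].
pose proof (IHn ltac:(intros; apply H; lia)) as IH.
pose proof (H n ltac:(lia)) as Hn.
unfold predE at 1; destruct (Rlt_dec thr (P n)) as [Hl|Hl];
  [destruct (Nat.eqb n m)|]; cbn -[INR]; try rewrite S_INR; lra.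
Qed.

Lemma aux_thr u a x y : 0 < a -> u * / a < x -> x <= a * y -> u * / a * / a < y.
Proof.
intros Ha H1 H2.
apply (Rmult_lt_reg_r a); auto.
replace (u * / a * / a * a) with (u * / a) by (field; lra).
lra.
Qed.

Lemma correct N Delta P Q m : (4 <= N)%nat -> 0 <= Delta -> is_dist N P -> is_dist N Q ->
  close N Delta P Q -> (m < N)%nat -> Dec N Delta Q (Enc N Delta P m) = m.
Proof.
intros HN HD HP HQ Hc Hm.
pose proof (n_of_spec N ltac:(lia)) as HNn.
unfold Enc; destruct (Rlt_dec 0 (P m)) as [Hp|Hp].
- set (k := kP (P m)).
  unfold Dec; cbn beta iota zeta.
  rewrite split_unary_repeat; cbn beta iota zeta.
  rewrite <- (app_nil_r (MC.eposx (bof N Delta k) (n_of N) (MC.Tlist (predE P m (thrE k Delta)) N) m)).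
  pose proof (dist_le1 N P m HP Hm) as Hp1.
  destruct (kP_spec (P m) Hp Hp1) as [Hk1 [Hk2 Hk3]]. fold k in Hk1, Hk2.
  destruct (D2_spec Delta HD) as [HD1 HD2].
  set (a := Rpower 2 Delta).
  assert (Ha : 0 < a) by (unfold a, Rpower; apply exp_pos).
  assert (Ea2 : Rpower 2 (2 * Delta) = a * a)
    by (unfold a; rewrite <- Rpower_plus; f_equal; lra).
  assert (Hk0 : 0 < 2 ^ k) by (apply pow_lt; lra).
  destruct (Hc m Hm) as [Hc1 Hc2]. fold a in Hc1, Hc2.
  apply MC.dpos_epos.
  + exact Hm.
  + exact HNn.
  + unfold predE; destruct (Rlt_dec _ _); [rewrite Nat.eqb_refl|]; reflexivity.
  + pose proof (count_Tlist N P m (thrE k Delta) (proj1 HP)) as Hc0.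
    rewrite (proj2 HP) in Hc0.
    set (s := seq.size (MC.Tlist (predE P m (thrE k Delta)) N)) in *.
    set (T := 2 ^ k * Rpower 2 (2 * Delta)).
    assert (HT : 0 < T) by (unfold T; rewrite Ea2; apply Rmult_lt_0_compat; nra).
    assert (HsT : INR s <= T).
    { assert (E : thrE k Delta = / T) by reflexivity. rewrite E in Hc0.
      replace (INR s) with (INR s * / T * T) by (field; lra).
      apply Rle_trans with (1 * T); [|lra]. apply Rmult_le_compat_r; lra. }
    assert (HT2 : T <= 2 ^ (k + D2 Delta)).
    { unfold T; rewrite pow_add. apply Rmult_le_compat_l; lra. }
    assert (Hsn : (s <= 2 ^ (k + D2 Delta))%nat).
    { apply INR_le; rewrite pow_INR. replace (INR 2) with 2 by (simpl; lra). lra. }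
    pose proof (lgn_spec N) as Hl.
    unfold bof. rewrite Nat.pow_succ_r', (Nat.pow_add_r 2 (k + D2 Delta) (lgn_of N)).
    assert (HX : (0 < 2 ^ (k + D2 Delta))%nat) by (apply Nat.neq_0_lt_0, Nat.pow_nonzero; lia).
    set (X := (2 ^ (k + D2 Delta))%nat) in *. set (Y := (2 ^ lgn_of N)%nat) in *.
    assert (H1 : (s * n_of N <= X * n_of N)%nat) by (apply Nat.mul_le_mono_r; exact Hsn).
    assert (H2 : (X * n_of N < X * Y)%nat) by (apply Nat.mul_lt_mono_pos_l; lia).
    change (ssrnat.muln s (n_of N)) with (s * n_of N)%nat.
    lia.
  + destruct (Rlt_dec (thrD k Delta) (Q m)) as [_|Hn]; [reflexivity| exfalso; apply Hn].
    unfold thrD; fold a. rewrite Rinv_mult.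
    apply (Rmult_lt_reg_r a); auto.
    replace (/ 2 ^ k * / a * a) with (/ 2 ^ k) by (field; lra).
    nra.
  + intros i Hi Hci Hne. unfold predE.
    destruct (Rlt_dec (thrD k Delta) (Q i)) as [Hq|]; [|discriminate].
    destruct (Rlt_dec (thrE k Delta) (P i)) as [_|Hn].
    * apply Bool.negb_true_iff, Nat.eqb_neq; auto.
    * exfalso; apply Hn. destruct (Hc i Hi) as [_ Hc3]. fold a in Hc3.
      unfold thrE, thrD in *. fold a in Hq. rewrite Ea2, !Rinv_mult. rewrite Rinv_mult in Hq.
      rewrite <- Rmult_assoc.
      apply (aux_thr (/ 2 ^ k) a (Q i) (P i)); auto.
- unfold Dec; cbn beta iota zeta.
  rewrite MC.frombits_tobits by lia.
  destruct (Nat.ltb_spec m N); [reflexivity| lia].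
Qed.

Lemma len_bound N Delta P m : (4 <= N)%nat -> 0 <= Delta -> 0 < P m -> P m <= 1 ->
  INR (length (Enc N Delta P m)) <= 3 * log2 (/ P m) + 4 * Delta + 15 * LL N.
Proof.
intros HN HD Hp Hp1.
unfold Enc; destruct (Rlt_dec 0 (P m)) as [_|Hn]; [|contradiction].
destruct (kP_spec (P m) Hp Hp1) as [_ [Hk2 Hk3]].
destruct (D2_spec Delta HD) as [HD1 _].
pose proof (lgn_bound N HN). pose proof (LL_ge1 N HN).
set (k := kP (P m)) in *.
change (length (true :: ?l)) with (S (length l)).
rewrite length_app, repeat_length.
change (length (false :: ?l)) with (S (length l)).
rewrite MC.length_eposx. unfold bof.
repeat (rewrite S_INR || rewrite plus_INR).
lra.
Qed.

Lemma entropy_nonneg N P : is_dist N P -> 0 <= entropy N P.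
Proof.
intros HP; unfold entropy; apply rsum_nonneg; intros i Hi.
destruct (Rlt_dec 0 (P i)) as [Hp|]; [|lra].
destruct (kP_spec (P i) Hp (dist_le1 N P i HP Hi)) as [_ [_ H3]].
nra.
Qed.

Theorem theorem1 :
  exists C : R, forall (N : nat) (Delta : R), (4 <= N)%nat -> 0 <= Delta ->
    exists (E : (nat -> R) -> nat -> list bool)
           (D : (nat -> R) -> list bool -> nat)
           (L : (nat -> R) -> R),
      is_UCS N Delta L E D /\
      forall P, is_dist N P ->
        L P <= C * (entropy N P + Delta + log2 (log2 (INR N))).
Proof.
exists 15. intros N Delta HN HD.
exists (Enc N Delta), (Dec N Delta),
  (fun P => 3 * entropy N P + (4 * Delta + 15 * LL N)).
pose proof (LL_ge1 N HN) as HLL.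
split; [split; [|split; [|split]]|].
- intros Q x. unfold Dec. destruct x as [|[|] r].
  + lia.
  + destruct (split_unary r); apply MC.dposx_lt; lia.
  + cbv zeta; destruct (Nat.ltb_spec (MC.frombits r) N); lia.
- intros P HP. pose proof (entropy_nonneg N P HP). lra.
- intros P Q m HP HQ Hc Hm. apply correct; auto.
- intros P HP. unfold exp_len.
  apply Rle_trans with
    (rsum N (fun m => 3 * (if Rlt_dec 0 (P m) then P m * log2 (/ P m) else 0)
                      + P m * (4 * Delta + 15 * LL N))).
  + apply rsum_le; intros m Hm.
    destruct (Rlt_dec 0 (P m)) as [Hp|Hp].
    * pose proof (len_bound N Delta P m HN HD Hp (dist_le1 N P m HP Hm)).
      apply Rle_trans with (P m * (3 * log2 (/ P m) + 4 * Delta + 15 * LL N)).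
      -- apply Rmult_le_compat_l; lra.
      -- right; ring.
    * assert (P m = 0) by (pose proof (proj1 HP m Hm); lra).
      rewrite H; lra.
  + rewrite rsum_plus, rsum_scal, rsum_scal_r, (proj2 HP).
    unfold entropy; right; ring.
- intros P HP. pose proof (entropy_nonneg N P HP). unfold LL in *. lra.
Qed.
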